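(* No nonzero $E$-linear code of length $2n$ is both left symplectic nice and right symplectic nice.
   Context: $E=\langle \kappa,\tau \mid 2\kappa=2\tau=0,\ \kappa^2=\kappa,\ \tau^2=\tau,\ \kappa\tau=\kappa,\ \tau\kappa=\tau\rangle$ is the non-unital ring $\{0,\kappa,\tau,\zeta\}$ ($|E|=4$), $\zeta=\kappa+\tau$, with $e\kappa=e\tau=e$, $e\zeta=0$ for all $e\in E$. An $E$-linear code of length $2n$ is a left $E$-submodule $C\subseteq E^{2n}$. Symplectic inner product: for $x=(u|v),y=(u'|v')\in E^{2n}$, $\langle x,y\rangle_s=\sum_i u_iv'_i+\sum_i v_iu'_i$. $C^{\perp_{S_L}}=\{z\in E^{2n}:\langle z,w\rangle_s=0\ \forall w\in C\}$, $C^{\perp_{S_R}}=\{z\in E^{2n}:\langle w,z\rangle_s=0\ \forall w\in C\}$. $C$ is left (resp. right) symplectic nice if $|C|\,|C^{\perp_{S_L}}|=|E|^{2n}$ (resp. $|C|\,|C^{\perp_{S_R}}|=|E|^{2n}$). *)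

(* Defs.v *)
From HB Require Import structures.
From mathcomp Require Import all_boot.
Set Implicit Arguments. Unset Strict Implicit. Unset Printing Implicit Defensive.

(* The non-unital ring E = {0, kappa, tau, zeta}, zeta = kappa + tau,
   with 2k = 2t = 0, k^2 = k, t^2 = t, k t = k, t k = t.
   Multiplication table: e * kappa = e * tau = e, e * zeta = 0, e * 0 = 0. *)
Inductive E := E0 | Ek | Et | Ez.

Definition E_to (x : E) : bool * bool :=
  match x with E0 => (false, false) | Ek => (true, false)
             | Et => (false, true) | Ez => (true, true) end.
Definition E_of (p : bool * bool) : E :=
  match p with (false, false) => E0 | (true, false) => Ek
             | (false, true) => Et | (true, true) => Ez end.
Lemma E_toK : cancel E_to E_of. Proof. by case. Qed.

HB.instance Definition _ := Countable.copy E (can_type E_toK).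
HB.instance Definition _ := Finite.copy E (can_type E_toK).

Definition eadd (x y : E) : E :=
  E_of ((E_to x).1 (+) (E_to y).1, (E_to x).2 (+) (E_to y).2).

Definition emul (x y : E) : E :=
  match y with Ek | Et => x | _ => E0 end.

Definition vec (n : nat) := ({ffun 'I_n -> E} * {ffun 'I_n -> E})%type.

Definition vzero n : vec n := ([ffun => E0], [ffun => E0]).
Definition vadd n (x y : vec n) : vec n :=
  ([ffun i => eadd (x.1 i) (y.1 i)], [ffun i => eadd (x.2 i) (y.2 i)]).
Definition vscale n (e : E) (x : vec n) : vec n :=
  ([ffun i => emul e (x.1 i)], [ffun i => emul e (x.2 i)]).

Definition is_code n (C : {set vec n}) : Prop :=
  [/\ vzero n \in C,
      (forall x y, x \in C -> y \in C -> vadd x y \in C) &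
      (forall e x, x \in C -> vscale e x \in C)].

Definition sympl n (x y : vec n) : E :=
  eadd (\big[eadd/E0]_(i < n) emul (x.1 i) (y.2 i))
       (\big[eadd/E0]_(i < n) emul (x.2 i) (y.1 i)).

Definition sym_left_dual n (C : {set vec n}) : {set vec n} :=
  [set z | [forall w in C, sympl z w == E0]].
Definition sym_right_dual n (C : {set vec n}) : {set vec n} :=
  [set z | [forall w in C, sympl w z == E0]].

Definition left_sym_nice n (C : {set vec n}) : Prop :=
  #|C| * #|sym_left_dual C| = #|{: E}| ^ (2 * n).
Definition right_sym_nice n (C : {set vec n}) : Prop :=
  #|C| * #|sym_right_dual C| = #|{: E}| ^ (2 * n).

(* Main.v *)
From HB Require Import structures.
Require Import Defs.
From mathcomp Require Import all_boot zify.
Set Implicit Arguments. Unset Strict Implicit. Unset Printing Implicit Defensive.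

Lemma eaddA : associative eadd. Proof. by do 3 case. Qed.
Lemma eaddC : commutative eadd. Proof. by do 2 case. Qed.
Lemma eadd0 : left_id E0 eadd. Proof. by case. Qed.
Lemma eaddr0 : right_id E0 eadd. Proof. by case. Qed.
Lemma eaddxx x : eadd x x = E0. Proof. by case: x. Qed.
Lemma eaddKx x y : eadd (eadd y x) x = y. Proof. by case: x; case: y. Qed.
HB.instance Definition _ := Monoid.isComLaw.Build E E0 eadd eaddA eaddC eadd0.

Lemma emulDr a b c : emul a (eadd b c) = eadd (emul a b) (emul a c).
Proof. by case: a; case: b; case: c. Qed.
Lemma emulDl a b c : emul (eadd a b) c = eadd (emul a c) (emul b c).
Proof. by case: a; case: b; case: c. Qed.
Lemma emulA a b c : emul a (emul b c) = emul (emul a b) c.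
Proof. by case: a; case: b; case: c. Qed.
Lemma emul0r a : emul a E0 = E0. Proof. by case: a. Qed.
Lemma emul0l a : emul E0 a = E0. Proof. by case: a. Qed.

Lemma emul_sum a n (F : 'I_n -> E) :
  emul a (\big[eadd/E0]_(i < n) F i) = \big[eadd/E0]_(i < n) emul a (F i).
Proof. by apply: (big_morph _ (emulDr a)); rewrite emul0r. Qed.

Lemma vecP n (x y : vec n) :
  (forall i, x.1 i = y.1 i) -> (forall i, x.2 i = y.2 i) -> x = y.
Proof.
by case: x y => [x1 x2] [y1 y2] /= h1 h2; congr pair; apply/ffunP.
Qed.

Lemma sympl_addr n (x y z : vec n) :
  sympl x (vadd y z) = eadd (sympl x y) (sympl x z).
Proof.
rewrite /sympl /vadd /=.
under eq_bigr do rewrite ffunE emulDr.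
under [X in eadd _ X]eq_bigr do rewrite ffunE emulDr.
rewrite !big_split /=.
by rewrite -!eaddA; congr eadd; rewrite !eaddA; congr eadd; rewrite eaddC.
Qed.

Lemma sympl_addl n (x y z : vec n) :
  sympl (vadd x y) z = eadd (sympl x z) (sympl y z).
Proof.
rewrite /sympl /vadd /=.
under eq_bigr do rewrite ffunE emulDl.
under [X in eadd _ X]eq_bigr do rewrite ffunE emulDl.
rewrite !big_split /=.
by rewrite -!eaddA; congr eadd; rewrite !eaddA; congr eadd; rewrite eaddC.
Qed.

Lemma sympl_scalel n e (x y : vec n) :
  sympl (vscale e x) y = emul e (sympl x y).
Proof.
rewrite /sympl /vscale /= emulDr !emul_sum.
by congr eadd; apply: eq_bigr => i _; rewrite ffunE emulA.
Qed.

Lemma sympl_kvr n (x y : vec n) : sympl x (vscale Ek y) = sympl x y.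
Proof.
rewrite /sympl /vscale /=.
by congr eadd; apply: eq_bigr => i _; rewrite ffunE; case: (y.1 i); case: (x.2 i) => //;
  case: (y.2 i); case: (x.1 i).
Qed.

Definition bvec n := ({ffun 'I_n -> bool} * {ffun 'I_n -> bool})%type.
Definition b2E (b : bool) := if b then Ek else E0.
Definition b2Z (b : bool) := if b then Ez else E0.
Definition phi (x : E) : bool := match x with Ek | Et => true | _ => false end.
Definition kvec n (b : bvec n) : vec n :=
  ([ffun i => b2E (b.1 i)], [ffun i => b2E (b.2 i)]).
Definition zvec n (b : bvec n) : vec n :=
  ([ffun i => b2Z (b.1 i)], [ffun i => b2Z (b.2 i)]).
Definition phiv n (w : vec n) : bvec n :=
  ([ffun i => phi (w.1 i)], [ffun i => phi (w.2 i)]).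
Definition KV n := [set kvec b | b : bvec n].
Definition ZV n := [set zvec b | b : bvec n].

Lemma kv_kvec n (w : vec n) : vscale Ek w = kvec (phiv w).
Proof. by apply: vecP => i /=; rewrite !ffunE; case: (_ i). Qed.

Lemma bvecP n (x y : bvec n) :
  (forall i, x.1 i = y.1 i) -> (forall i, x.2 i = y.2 i) -> x = y.
Proof.
by case: x y => [x1 x2] [y1 y2] /= h1 h2; congr pair; apply/ffunP.
Qed.

Lemma kvec_inj n : injective (@kvec n).
Proof.
move=> b c /(congr1 (fun v => (v.1, v.2))) [] /ffunP h1 /ffunP h2.
apply: bvecP => i; [move: (h1 i) | move: (h2 i)]; rewrite !ffunE;
  by case: (_ i); case: (_ i).
Qed.

Lemma zvec_inj n : injective (@zvec n).
Proof.
move=> b c /(congr1 (fun v => (v.1, v.2))) [] /ffunP h1 /ffunP h2.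
apply: bvecP => i; [move: (h1 i) | move: (h2 i)]; rewrite !ffunE;
  by case: (_ i); case: (_ i).
Qed.

Lemma card_bvec n : #|{: bvec n}| = 2 ^ n * 2 ^ n.
Proof. by rewrite card_prod card_ffun card_bool card_ord. Qed.

Lemma card_KV n : #|KV n| = 2 ^ n * 2 ^ n.
Proof. by rewrite card_imset ?cardsT ?card_bvec //; apply: kvec_inj. Qed.

Lemma card_ZV n : #|ZV n| = 2 ^ n * 2 ^ n.
Proof. by rewrite card_imset ?cardsT ?card_bvec //; apply: zvec_inj. Qed.

Lemma KV_add n (a a' : vec n) : a \in KV n -> a' \in KV n -> vadd a a' \in KV n.
Proof.
case/imsetP=> b _ ->; case/imsetP=> b' _ ->; apply/imsetP.
exists ([ffun i => b.1 i (+) b'.1 i], [ffun i => b.2 i (+) b'.2 i]) => //.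
by apply: vecP => i /=; rewrite !ffunE; case: (_ i); case: (_ i).
Qed.

Lemma vzero_KV n : vzero n \in KV n.
Proof.
apply/imsetP; exists ([ffun => false], [ffun => false]) => //.
by apply: vecP => i /=; rewrite !ffunE.
Qed.

Definition isK (x : E) := (x == E0) || (x == Ek).

Lemma sympl_KV n (a g : vec n) : a \in KV n -> isK (sympl a g).
Proof.
case/imsetP=> b _ ->; rewrite /sympl /=.
have hD x y : isK x -> isK y -> isK (eadd x y) by case: x; case: y.
apply hD; (apply (big_ind isK) => //; try exact: hD; move=> i _; rewrite ffunE).
  by case: (b.1 i); case: (g.2 i).
by case: (b.2 i); case: (g.1 i).
Qed.

Lemma sympl_sym n (a c : vec n) : a \in KV n -> c \in KV n ->
  sympl a c = sympl c a.
Proof.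
case/imsetP=> b _ ->; case/imsetP=> b' _ ->; rewrite /sympl /= eaddC.
by congr eadd; apply: eq_bigr => i _; rewrite !ffunE; case: (_ i); case: (_ i).
Qed.

Lemma sympl_Zr n (w c : vec n) : c \in ZV n -> sympl w c = E0.
Proof.
case/imsetP=> b _ ->; rewrite /sympl /= big1 ?big1 // => i _; rewrite ffunE;
  by case: (_ i); case: (_ i).
Qed.

Definition pmap n (p : vec n * vec n) := vadd p.1 (vscale Et p.2).

Lemma pmap_inj n : {in setX (KV n) (KV n) &, injective (@pmap n)}.
Proof.
move=> [x y] [x' y'] /setXP [hx hy] /setXP [hx' hy'].
case/imsetP: hx => b _ ->; case/imsetP: hy => c _ ->.
case/imsetP: hx' => b' _ ->; case/imsetP: hy' => c' _ -> /=.
move/(congr1 (fun v => (v.1, v.2))) => [] /ffunP h1 /ffunP h2.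
congr pair; congr kvec; apply: bvecP => i;
  [move: (h1 i) | move: (h2 i) | move: (h1 i) | move: (h2 i)]; rewrite !ffunE;
  by case: (b.1 i); case: (b.2 i); case: (c.1 i); case: (c.2 i);
     case: (b'.1 i); case: (b'.2 i); case: (c'.1 i); case: (c'.2 i).
Qed.

Definition zmap n (p : vec n * vec n) := vadd p.1 p.2.

Lemma zmap_inj n : {in setX (KV n) (ZV n) &, injective (@zmap n)}.
Proof.
move=> [x y] [x' y'] /setXP [hx hy] /setXP [hx' hy'].
case/imsetP: hx => b _ ->; case/imsetP: hy => c _ ->.
case/imsetP: hx' => b' _ ->; case/imsetP: hy' => c' _ -> /=.
move/(congr1 (fun v => (v.1, v.2))) => [] /ffunP h1 /ffunP h2.
congr pair; [congr kvec | congr zvec]; apply: bvecP => i;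
  [move: (h1 i) | move: (h2 i) | move: (h1 i) | move: (h2 i)]; rewrite !ffunE;
  by case: (b.1 i); case: (b.2 i); case: (c.1 i); case: (c.2 i);
     case: (b'.1 i); case: (b'.2 i); case: (c'.1 i); case: (c'.2 i).
Qed.

Lemma vaddK n (x y : vec n) : vadd (vadd x y) y = x.
Proof. by apply: vecP => i; rewrite !ffunE eaddKx. Qed.
Lemma vaddC n (x y : vec n) : vadd x y = vadd y x.
Proof. by apply: vecP => i; rewrite !ffunE eaddC. Qed.

Lemma vaddA n : associative (@vadd n).
Proof. by move=> x y z; apply: vecP => i; rewrite !ffunE eaddA. Qed.
Lemma vadd0 n (x : vec n) : vadd (vzero n) x = x.
Proof. by apply: vecP => i; rewrite !ffunE eadd0. Qed.
Lemma vaddxx n (x : vec n) : vadd x x = vzero n.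
Proof. by apply: vecP => i; rewrite !ffunE eaddxx. Qed.
Lemma vaddACA n (a b c d : vec n) :
  vadd (vadd a b) (vadd c d) = vadd (vadd a c) (vadd b d).
Proof.
by rewrite -!vaddA; congr vadd; rewrite !vaddA; congr vadd; rewrite vaddC.
Qed.

Section Span.
Variable n : nat.
Implicit Types gs : seq (vec n).

Definition Sp gs : {set vec n} :=
  foldr (fun g S => S :|: [set vadd (vscale Ek g) s | s in S]) [set vzero n] gs.
Definition Pp gs : {set vec n} :=
  [set a in KV n | all (fun g => sympl a g == E0) gs].

Lemma Sp0 gs : vzero n \in Sp gs.
Proof. by elim: gs => [|g gs IH] /=; rewrite ?inE ?IH. Qed.

Lemma Sp_add gs x y : x \in Sp gs -> y \in Sp gs -> vadd x y \in Sp gs.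
Proof.
elim: gs x y => [|g gs IH] x y /=.
  by rewrite !inE => /eqP -> /eqP ->; rewrite vadd0.
set k := vscale Ek g.
rewrite !inE => /orP [hx | /imsetP [s hs ->]] /orP [hy | /imsetP [s' hs' ->]].
- by rewrite IH.
- apply/orP; right; apply/imsetP; exists (vadd x s'); first exact: IH.
  by rewrite vaddA (vaddC x) vaddA.
- apply/orP; right; apply/imsetP; exists (vadd s y); first exact: IH.
  by rewrite vaddA.
- by rewrite vaddACA vaddxx vadd0 IH.
Qed.

Lemma Pp_add gs a a' : a \in Pp gs -> a' \in Pp gs -> vadd a a' \in Pp gs.
Proof.
rewrite !inE => /andP [ha hall] /andP [ha' hall']; rewrite KV_add //=.
apply/allP => g hg; rewrite sympl_addl.
by rewrite (eqP (allP hall g hg)) (eqP (allP hall' g hg)).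
Qed.

Lemma SpPp gs s a : s \in Sp gs -> a \in Pp gs -> sympl a s = E0.
Proof.
elim: gs s => [|g gs IH] s /=.
  by rewrite !inE => /eqP ->; rewrite /sympl !big1 // => i _; rewrite ffunE emul0r.
move=> hs ha; have ha' : a \in Pp gs.
  by move: ha; rewrite !inE /= => /andP [-> /andP [_ ->]].
have hg : sympl a g = E0 by move: ha; rewrite !inE /= => /andP [_ /andP [/eqP ->]].
move: hs; rewrite inE => /orP [hs | /imsetP [s' hs' ->]]; first exact: IH.
by rewrite sympl_addr sympl_kvr hg (IH _ hs' ha').
Qed.

Lemma KV_of gs a : a \in Pp gs -> a \in KV n.
Proof. by rewrite inE => /andP []. Qed.

Lemma halving gs g : #|Pp gs| <= 2 * #|Pp (g :: gs)|.
Proof.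
set B := [set a | sympl a g == E0].
have e0 : Pp gs :&: B = Pp (g :: gs).
  by apply/setP => a; rewrite !inE /= -andbA (andbC (all _ _)).
rewrite -(cardsID B (Pp gs)) e0 mul2n -addnn leq_add2l.
have [-> | [a1 ha1]] := set_0Vmem (Pp gs :\: B); first by rewrite cards0.
have hinj : injective (fun x : vec n => vadd x a1) by apply: (can_inj (g := fun x : vec n => vadd x a1)) => x; rewrite vaddK.
rewrite -(card_imset _ hinj); apply: subset_leq_card; apply/subsetP => x.
case/imsetP => a ha ->; rewrite -e0 in_setI; move: ha ha1; rewrite !in_setD => /andP [hB hP] /andP [hB1 hP1]; rewrite !inE in hB hB1.
rewrite (Pp_add hP hP1) /= inE sympl_addl.
have hK1 := sympl_KV g (KV_of hP); have hK2 := sympl_KV g (KV_of hP1).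
move: hB hB1 hK1 hK2; rewrite /isK.
by case: (sympl a g); case: (sympl a1 g).
Qed.

Lemma span_ineq gs : 2 ^ n * 2 ^ n <= #|Sp gs| * #|Pp gs|.
Proof.
elim: gs => [|g gs IH].
  have -> : Pp [::] = KV n by apply/setP => a; rewrite inE andbT.
  by rewrite /= cards1 mul1n card_KV.
set k := vscale Ek g.
have [hk | hk] := boolP (k \in Sp gs).
  have -> : Pp (g :: gs) = Pp gs.
    apply/setP => a; rewrite !inE /=; apply/idP/idP => /andP [hK h].
      by case/andP: h => _ ->; rewrite hK.
    rewrite hK h andbT /=; apply/eqP; rewrite -sympl_kvr; apply: (SpPp hk).
    by rewrite inE hK h.
  apply: (leq_trans IH); rewrite leq_mul2r; apply/orP; right.
  by apply: subset_leq_card; rewrite /= subsetUl.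
have hinj : injective (vadd k).
  by apply: (can_inj (g := vadd k)) => x; rewrite vaddA vaddxx vadd0.
have hS : #|Sp (g :: gs)| = 2 * #|Sp gs|.
  have hI : Sp gs :&: [set vadd k s | s in Sp gs] = set0.
    apply/setP => x; rewrite !inE; apply/negP => /andP [hx /imsetP [s hs ex]].
    by move: hk; rewrite -(vaddK k s) -ex Sp_add.
  have := cardsUI (Sp gs) [set vadd k s | s in Sp gs].
  by rewrite hI cards0 addn0 card_imset // => /= ->; rewrite addnn mul2n.
apply: (leq_trans IH); rewrite hS -mulnA (mulnCA 2) leq_mul2l; apply/orP; right.
exact: halving.
Qed.

End Span.

Lemma cE : #|{: E}| = 4.
Proof.
have -> : #|{: E}| = #|{: bool * bool}|.
  apply: (bij_eq_card (f := E_to)); exists E_of; first exact: E_toK.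
  by case=> [[] []].
by rewrite card_prod card_bool.
Qed.

Lemma vscale_add n e (x y : vec n) :
  vscale e (vadd x y) = vadd (vscale e x) (vscale e y).
Proof. by apply: vecP => i; rewrite !ffunE emulDr. Qed.

Lemma vscaleA n e e' (x : vec n) : vscale e (vscale e' x) = vscale (emul e e') x.
Proof. by apply: vecP => i; rewrite !ffunE emulA. Qed.

Lemma vscale0 n e : vscale e (vzero n) = vzero n.
Proof. by apply: vecP => i; rewrite !ffunE emul0r. Qed.

Theorem mainTheorem12 (n : nat) (C : {set vec n}) :
  is_code C -> C != [set vzero n] ->
  ~ (left_sym_nice C /\ right_sym_nice C).
Proof.
case=> h0 hadd hsc hne [hl hr].
set N := 2 ^ n * 2 ^ n.
have hN : #|{: E}| ^ (2 * n) = N * N.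
  rewrite cE /N -!expnD -[4]/(2 ^ 2) -expnM; congr (2 ^ _); lia.
have N0 : 0 < N by rewrite /N muln_gt0 expn_gt0.
set Dk := [set vscale Ek w | w in C].
set M := [set a in KV n | [forall w in C, sympl a w == E0]].
have DkKV : Dk \subset KV n.
  by apply/subsetP => x /imsetP [w _ ->]; rewrite kv_kvec; apply: imset_f.
have MKV : M \subset KV n by apply/subsetP => x; rewrite inE => /andP [].
have DkC : Dk \subset C by apply/subsetP => x /imsetP [w hw ->]; exact: hsc.
have Dk0 : vzero n \in Dk by apply/imsetP; exists (vzero n) => //; rewrite vscale0.
have F4 : N <= #|Dk| * #|M|.
  apply: (leq_trans (span_ineq (enum C))); apply: leq_mul; apply: subset_leq_card.
    have : all (mem C) (enum C) by apply/allP => w; rewrite mem_enum.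
    elim: (enum C) => [|g gs IH] /=.
      by move=> _; rewrite sub1set.
    case/andP => hg /IH hsub; apply/subsetP => x; rewrite inE.
    case/orP => [/(subsetP hsub) // | /imsetP [s hs ->]].
    move/(subsetP hsub): hs => /imsetP [w hw ->].
    by rewrite -vscale_add; apply: imset_f; apply: hadd.
  apply/subsetP => a; rewrite !inE => /andP [-> /allP hall] /=.
  by apply/forallP => w; apply/implyP => hw; apply: hall; rewrite mem_enum.
set P := [set pmap p | p in setX Dk Dk].
have injD : {in setX Dk Dk &, injective (@pmap n)}.
  move=> p q hp hq; apply: pmap_inj.
    by move: hp; rewrite !inE => /andP [/(subsetP DkKV) -> /(subsetP DkKV) ->].
  by move: hq; rewrite !inE => /andP [/(subsetP DkKV) -> /(subsetP DkKV) ->].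
have cP : #|P| = #|Dk| * #|Dk| by rewrite card_in_imset // cardsX.
have PC : P \subset C.
  apply/subsetP => x /imsetP [[d d'] /setXP [hd hd'] ->]; rewrite /pmap /=.
  by apply: hadd; [exact: (subsetP DkC) | apply: hsc; exact: (subsetP DkC)].
have injM : {in setX M M &, injective (@pmap n)}.
  move=> [p1 p2] [q1 q2] hp hq; apply: pmap_inj.
    by move: hp; rewrite !in_setX => /andP [/(subsetP MKV) -> /(subsetP MKV) ->].
  by move: hq; rewrite !in_setX => /andP [/(subsetP MKV) -> /(subsetP MKV) ->].
have F2 : #|M| * #|M| <= #|sym_left_dual C|.
  rewrite -cardsX -(card_in_imset injM); apply: subset_leq_card.
  apply/subsetP => x /imsetP [[a b] /setXP [ha hb] ->]; rewrite inE /pmap /=.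
  apply/forallP => w; apply/implyP => hw.
  move: ha hb; rewrite !inE => /andP [_ /forallP ha] /andP [_ /forallP hb].
  rewrite sympl_addl sympl_scalel.
  by rewrite (eqP (implyP (ha w) hw)) (eqP (implyP (hb w) hw)).
have m0 : 0 < #|M| by move: F4; case: #|M| => //; rewrite muln0 leqn0 => /eqP hh; rewrite hh in N0.
have cle : #|C| <= #|Dk| * #|Dk|.
  move: hl; rewrite /left_sym_nice hN => hl.
  have h1 : #|C| * (#|M| * #|M|) <= N * N by rewrite -hl leq_mul2l F2 orbT.
  have h2 : N * N <= (#|Dk| * #|M|) * (#|Dk| * #|M|) by apply: leq_mul.
  have h3 : #|C| * (#|M| * #|M|) <= (#|Dk| * #|Dk|) * (#|M| * #|M|).
    by apply: (leq_trans h1); apply: (leq_trans h2); rewrite mulnACA.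
  by rewrite leq_mul2r muln_eq0 -[_ == 0]negbK -lt0n m0 in h3.
have CP : C = P.
  by apply/eqP; rewrite eq_sym eqEcard PC cP.
have injZ : {in setX M (ZV n) &, injective (@zmap n)}.
  move=> [p1 p2] [q1 q2] hp hq; apply: zmap_inj.
    by move: hp; rewrite !in_setX => /andP [/(subsetP MKV) -> ->].
  by move: hq; rewrite !in_setX => /andP [/(subsetP MKV) -> ->].
have F3 : #|M| * N <= #|sym_right_dual C|.
  rewrite /N -card_ZV -cardsX -(card_in_imset injZ); apply: subset_leq_card.
  apply/subsetP => x /imsetP [[a c] /setXP [ha hc] ->]; rewrite inE /zmap /=.
  apply/forallP => w; apply/implyP; rewrite CP => /imsetP [[d d'] /setXP [hd hd'] ->].
  rewrite /pmap /= sympl_addr (sympl_Zr _ hc) eaddr0 sympl_addl sympl_scalel.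
  have key e : e \in Dk -> sympl e a = E0.
    move=> he; rewrite (sympl_sym (subsetP DkKV _ he) (subsetP MKV _ ha)).
    case/imsetP: he => w0 hw0 ->; rewrite sympl_kvr.
    by move: ha; rewrite inE => /andP [_ /forallP /(_ w0) /implyP /(_ hw0) /eqP].
  by rewrite (key _ hd) (key _ hd').
have dle : #|Dk| <= 1.
  move: hr; rewrite /right_sym_nice hN {1}CP cP => hr.
  have h1 : #|Dk| * #|Dk| * (#|M| * N) <= N * N by rewrite -hr leq_mul2l F3 orbT.
  have h2 : #|Dk| * (N * N) <= N * N.
    apply: leq_trans h1; rewrite -mulnA leq_mul2l; apply/orP; right.
    by rewrite mulnA leq_mul2r F4 orbT.
  by rewrite -{2}[N * N]mul1n leq_mul2r muln_eq0 -[N == 0]negbK -lt0n N0 in h2.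
have Dkz : forall d, d \in Dk -> d = vzero n.
  by move=> d hd; move/card_le1P: dle => /(_ _ Dk0 d); rewrite hd inE => /esym/eqP.
move/eqP: hne; apply; apply/eqP; rewrite eqEsubset sub1set h0 andbT CP.
apply/subsetP => x /imsetP [[d d'] /setXP [hd hd'] ->]; rewrite inE /pmap /=.
by rewrite (Dkz _ hd) (Dkz _ hd') vscale0 vadd0.
Qed.
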